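(* Let $\mathcal{X}=\langle x_1,\dots,x_n\rangle$ be an input sequence of $n$ colored items in which exactly $\sigma$ distinct colors appear, and let $o_1\ge o_2$ denote the number of occurrences in $\mathcal{X}$ of the most frequent and of the second most frequent color, respectively. Let $k\ge 1$ be a buffer size satisfying at least one of $$2\left\lceil \frac{k}{\sigma}\right\rceil > o_1 \qquad\text{or}\qquad \left\lceil \frac{k}{\sigma}\right\rceil > o_2 .$$ Process $\mathcal{X}$ with a buffer of size $k$ using the Most-Frequent-Color strategy (described in the context), and assume that every color selection during the run is made at a moment when the buffer contains exactly $k$ items. Then the output sequence is optimal: the items of each color appear consecutively in the output, i.e. the output consists of exactly $\sigma$ maximal monochromatic blocks (equivalently, it has exactly $\sigma-1$ color changes, the minimum possible).
   Context: Reordering buffer model (uniform cost): items of the input sequence arrive one at a time, in order, and are inserted into a buffer that can hold at most $k$ items. At any time there is a current output color. The strategy is lazy: whenever the buffer contains items of the current output color, these items are removed from the buffer and appended to the output sequence, and vacancies are refilled from the input (newly arriving items of the current output color are likewise output immediately). When the buffer contains no item of the current output color, a new output color is selected among the colors present in the buffer, and all buffer items of that color are appended to the output. The Most-Frequent-Color strategy always selects, as the new output color, a color having the largest number of items currently in the buffer (ties broken arbitrarily). The process continues until the input and the buffer are both empty. The cost of the output is the number of pairs of consecutive output items with different colors; any output must contain at least $\sigma$ maximal monochromatic blocks. *)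

(* Defs.v *)
From mathcomp Require Import all_boot.
Set Implicit Arguments. Unset Strict Implicit. Unset Printing Implicit Defensive.

(* State of the reordering buffer process:
   remaining input, buffer content (a multiset, stored as a seq),
   current output color (None before the first selection), output so far. *)
Record state := St { inp : seq nat; buf : seq nat; cur : option nat; out : seq nat }.

(* One atomic step of the lazy Most-Frequent-Color strategy with buffer size k.
   The boolean label is true iff the step is a color selection. *)
Inductive mfc_step (k : nat) : state -> state -> bool -> Prop :=
| mfc_emit i b c o :
    c \in b ->
    mfc_step k (St i b (Some c) o) (St i (rem c b) (Some c) (rcons o c)) false
| mfc_fill x i b cc o :
    (forall c, cc = Some c -> c \notin b) ->
    size b < k ->
    mfc_step k (St (x :: i) b cc o) (St i (x :: b) cc o) false
    (* vacancies are refilled from the input; an arriving item of the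
       current color is then output immediately by mfc_emit *)
| mfc_select i b cc o c :
    (forall c', cc = Some c' -> c' \notin b) ->
    (k <= size b \/ i = [::]) ->
    c \in b ->
    (forall d, count_mem d b <= count_mem c b) ->
    mfc_step k (St i b cc o) (St i b (Some c) o) true.

Inductive full_run (k : nat) : state -> state -> Prop :=
| full_run_refl s : full_run k s s
| full_run_step s s' t sel :
    mfc_step k s s' sel ->
    (sel = true -> size (buf s) = k) ->
    full_run k s' t ->
    full_run k s t.

Definition init_state (X : seq nat) : state := St X [::] None [::].

Definition final_state (s : state) : Prop := inp s = [::] /\ buf s = [::].

Definition nblocks (s : seq nat) : nat :=
  match s with
  | [::] => 0
  | x :: t => (count (fun p => p.1 != p.2) (zip (x :: t) t)).+1
  end.

Definition ncolors (X : seq nat) : nat := size (undup X).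

Definition occs (X : seq nat) : seq nat :=
  sort geq [seq count_mem c X | c <- undup X].

(* o1 = occurrences of most frequent color, o2 = of the second most
   frequent color (0 if there is none) *)
Definition o1 (X : seq nat) : nat := nth 0 (occs X) 0.
Definition o2 (X : seq nat) : nat := nth 0 (occs X) 1.

Definition ceil_div (a b : nat) : nat := (a + b.-1) %/ b.

(* Main.v *)
Require Import Defs.
From mathcomp Require Import all_boot zify.
Set Implicit Arguments.

Lemma perm_count {T : eqType} (P : pred T) {s1 s2 : seq T} :
  perm_eq s1 s2 -> count P s1 = count P s2.
Proof. by move/permP. Qed.

Lemma geq_trans : transitive geq.
Proof. move=> a b c /= h1 h2; exact: leq_trans h2 h1. Qed.

Lemma sorted_geq_head (s : seq nat) v :
  sorted geq s -> 0 < count (fun x => v <= x) s -> v <= nth 0 s 0.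
Proof.
case: s => [|x t] //= Hp.
have := order_path_min geq_trans Hp.
move=> /allP Ha.
case: (leqP v x) => // Hvx.
rewrite add0n -has_count => /hasP[y /Ha /= Hy /= Hvy].
have: v <= x by apply: leq_trans Hvy Hy.
by rewrite leqNgt Hvx.
Qed.

Lemma sorted_geq_second (s : seq nat) v :
  sorted geq s -> 1 < count (fun x => v <= x) s -> v <= nth 0 s 1.
Proof.
case: s => [|x [|y t]] //=; first by case: (v <= x).
move=> /andP[Hxy Hp].
have := order_path_min geq_trans Hp.
move=> /allP Ha.
case: (leqP v y) => // Hvy.
have Ht : count (fun x0 => v <= x0) t = 0.
  apply/eqP; rewrite -leqn0 leqNgt -has_count; apply/hasP => -[z /Ha /= Hz Hvz].
  have: v <= y by apply: leq_trans Hvz Hz.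
  by rewrite leqNgt Hvy.
rewrite Ht addn0; case: (v <= x) => //.
Qed.

Lemma count_occs X v :
  count (fun x => v <= x) (occs X) = count (fun e => v <= count_mem e X) (undup X).
Proof. by rewrite /occs (perm_count _ (permEl (perm_sort _ _))) count_map. Qed.

Lemma sorted_occs X : sorted geq (occs X).
Proof. apply: sort_sorted => a b; exact: leq_total. Qed.

Lemma le_o1 X c : c \in X -> count_mem c X <= o1 X.
Proof.
move=> Hc; apply: sorted_geq_head; first exact: sorted_occs.
rewrite count_occs.
have Hu : c \in undup X by rewrite mem_undup.
by rewrite (perm_count _ (perm_to_rem Hu)) /= leqnn.
Qed.

Lemma le_o2 X c d : c \in X -> d \in X -> c != d ->
  minn (count_mem c X) (count_mem d X) <= o2 X.
Proof.
move=> Hc Hd Hcd; apply: sorted_geq_second; first exact: sorted_occs.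
rewrite count_occs.
have Hu : c \in undup X by rewrite mem_undup.
rewrite (perm_count _ (perm_to_rem Hu)) /=.
have Hd' : d \in rem c (undup X) by rewrite (mem_rem_uniq _ (undup_uniq X)) inE eq_sym Hcd mem_undup.
rewrite geq_minl add1n ltnS.
move: Hd'; move: (rem c (undup X)) => r; elim: r => //= z r IH.
rewrite inE => /orP[/eqP <-|/IH]; first by rewrite geq_minr.
move=> H; apply: leq_trans H _; exact: leq_addl.
Qed.
Set Implicit Arguments.

Lemma cnt_rcons (y x : nat) t :
  count (fun p : nat * nat => p.1 != p.2) (zip (y :: rcons t x) (rcons t x)) =
  count (fun p : nat * nat => p.1 != p.2) (zip (y :: t) t) + (last y t != x).
Proof.
elim: t y => [|z t IH] y /=; first by rewrite addn0.
by rewrite IH addnA.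
Qed.

Lemma nblocks_rcons_new s x : x \notin s -> nblocks (rcons s x) = (nblocks s).+1.
Proof.
case: s => [|y t] //= Hx.
rewrite cnt_rcons.
have Hm : last y t \in y :: t by exact: mem_last.
case: eqP => [Heq|_]; last by rewrite addn1.
by rewrite Heq (negbTE Hx) in Hm.
Qed.

Lemma nblocks_rcons_old s x : x \in s -> last 0 s = x -> nblocks (rcons s x) = nblocks s.
Proof.
case: s => [|y t] //= _ <-.
rewrite cnt_rcons; case: eqP => [_|//]; by rewrite addn0.
Qed.

Lemma size_undup_rcons (s : seq nat) x :
  size (undup (rcons s x)) = size (undup s) + (x \notin s).
Proof.
elim: s => [|y s IH] //=.
rewrite mem_rcons !inE.
case: (eqVneq y x) => [->|Hyx] /=.
  case Hx: (x \in s) => /=; rewrite IH Hx ?addn0 ?addn1 //.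
case: (y \in s) => /=; by rewrite IH.
Qed.

Lemma pigeon (u b : seq nat) M :
  {subset b <= u} -> (forall d, count_mem d b <= M) -> size b <= size u * M.
Proof.
elim: u b M => [|y u IH] b M Hsub Hc.
  by case: b Hsub Hc => // z b /(_ z (mem_head _ _)).
rewrite /= mulSn -(count_predC (pred1 y) b).
apply: leq_add; first exact: Hc.
rewrite -size_filter; apply: IH.
  move=> z; rewrite mem_filter => /andP[Hz /Hsub]; rewrite inE.
  by case/orP => // /eqP Hzy; rewrite /= Hzy eqxx in Hz.
move=> d; rewrite count_filter; apply: leq_trans (Hc d).
by apply: sub_count => z /andP[].
Qed.

Lemma ceil_le k s c : 0 < s -> k <= s * c -> ceil_div k s <= c.
Proof.
move=> Hs Hk; rewrite /ceil_div -ltnS ltn_divLR //. lia.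
Qed.

Lemma ceil_pos k s : 0 < k -> 0 < s -> 0 < ceil_div k s.
Proof.
move=> Hk Hs; rewrite /ceil_div divn_gt0 //. lia.
Qed.

Record INV (X : seq nat) (k : nat) (s : state) : Prop := Inv {
  iP : perm_eq X (out s ++ buf s ++ inp s);
  iN : cur s = None -> out s = [::];
  iB : nblocks (out s) = size (undup (out s));
  iL : forall c, cur s = Some c -> c \notin out s \/ last 0 (out s) = c;
  iM : forall d, d \in out s -> cur s <> Some d -> ceil_div k (ncolors X) <= count_mem d (out s);
  iC : forall c, cur s = Some c -> ceil_div k (ncolors X) <= count_mem c (out s) + count_mem c (buf s)
}.

Lemma count_X (c : nat) {X o b i : seq nat} : perm_eq X (o ++ b ++ i) ->
  count_mem c X = count_mem c o + count_mem c b + count_mem c i.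
Proof. by move/permP => ->; rewrite !count_cat addnA. Qed.

Lemma step_inv X k s s' sel :
  1 <= k ->
  (o1 X < 2 * ceil_div k (ncolors X) \/ o2 X < ceil_div k (ncolors X)) ->
  mfc_step k s s' sel -> (sel = true -> size (buf s) = k) -> INV X k s -> INV X k s'.
Proof.
move=> Hk Hcond []; clear s s' sel.
-
  move=> i b c o Hcb _ [/= HP HN HB HL HM HC].
  have Hperm : perm_eq b (c :: rem c b) := perm_to_rem Hcb.
  split => //=.
  + apply: perm_trans HP _. rewrite cat_rcons perm_cat2l /=.
    rewrite -cat_cons perm_cat2r; exact: Hperm.
  + case Hco: (c \in o).
      have Hl : last 0 o = c by case: (HL c erefl) => //; rewrite Hco.
    by rewrite nblocks_rcons_old // size_undup_rcons Hco addn0.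
    by rewrite nblocks_rcons_new ?Hco // size_undup_rcons Hco HB addn1.
  + by move=> c' [<-]; right; rewrite last_rcons.
  + move=> d; rewrite mem_rcons inE => /orP[/eqP -> //|Hd] Hne.
    apply: leq_trans (HM d Hd Hne) _.
    by rewrite -cats1 count_cat leq_addr.
  + move=> c' [<-]; have := HC c erefl.
    by rewrite (perm_count _ Hperm) -cats1 count_cat /= eqxx; lia.
-
  move=> x i b cc o _ _ _ [/= HP HN HB HL HM HC].
  split => //=.
  + apply: perm_trans HP _. rewrite perm_cat2l.
    apply/permP => p /=; rewrite !count_cat /=; lia.
  + move=> c Hc; apply: leq_trans (HC c Hc) _; rewrite /= leq_add2l; exact: leq_addl.
-
  move=> i b cc o c Hcc Hsz Hcb Hmax /(_ erefl) /= Hsb [/= HP HN HB HL HM HC].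
  have HbX : {subset b <= undup X}.
    move=> z Hz; rewrite mem_undup (perm_mem HP) !mem_cat Hz; by rewrite orbT.
  have HcX : c \in X by rewrite -mem_undup; exact: HbX.
  have Hsig : 0 < ncolors X by rewrite /ncolors; case: (undup X) (HbX c Hcb).
  have Hcnt : ceil_div k (ncolors X) <= count_mem c b.
    apply: ceil_le => //; rewrite -Hsb; exact: pigeon HbX Hmax.
  have Hm : 0 < ceil_div k (ncolors X) by apply: ceil_pos.
  have HXc := count_X c HP.
  have Hcout : c \notin o.
    apply/negP => Hco.
    case: cc Hcc HN HL HM HC => [c'|] Hcc HN HL HM HC; last first.
      by rewrite HN in Hco.
    have Hc'b : c' \notin b by exact: Hcc.
    have Hne : c' != c by apply/eqP => E; rewrite E Hcb in Hc'b.
    have H1 : ceil_div k (ncolors X) <= count_mem c o.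
      apply: HM Hco _ => -[E]; by rewrite E eqxx in Hne.
    have H2 := HC c' erefl.
    have Hc'0 : count_mem c' b = 0 by apply/count_memPn.
    have HXc' := count_X c' HP.
    have Hc'X : c' \in X.
      rewrite -has_pred1 has_count HXc' Hc'0 addn0; apply: leq_trans Hm _; apply: leq_trans H2 _; rewrite Hc'0 addn0; exact: leq_addr.
    have Ha : 2 * ceil_div k (ncolors X) <= count_mem c X.
      rewrite HXc mul2n -addnn; apply: leq_trans (leq_add H1 Hcnt) _; exact: leq_addr.
    have Hb : ceil_div k (ncolors X) <= count_mem c' X.
      rewrite HXc'; apply: leq_trans H2 _; exact: leq_addr.
    case: Hcond => Hcond.
      have := @le_o1 X c HcX => Ho.
      have := leq_trans Ha Ho; by rewrite leqNgt Hcond.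
    have Hne' : c != c' by rewrite eq_sym.
    have Ho := @le_o2 X c c' HcX Hc'X Hne'.
    have : ceil_div k (ncolors X) <= o2 X.
      apply: leq_trans Ho; rewrite leq_min Hb andbT.
      apply: leq_trans Ha; rewrite mul2n -addnn; exact: leq_addr.
    by rewrite leqNgt Hcond.
  split => //=.
  + by move=> c' [<-]; left.
  + move=> d Hd Hne.
    case: cc Hcc HN HL HM HC => [c'|] Hcc HN HL HM HC; last by rewrite HN in Hd.
    case: (eqVneq d c') => [E|Hdc].
      subst d; have := HC c' erefl.
      have -> : count_mem c' b = 0 by apply/count_memPn; exact: Hcc.
      by rewrite addn0.
    by apply: HM => // -[E]; rewrite E eqxx in Hdc.
  + move=> c' [<-]; apply: leq_trans Hcnt _; exact: leq_addl.
Qed.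

Lemma run_inv X k s t : 1 <= k ->
  (o1 X < 2 * ceil_div k (ncolors X) \/ o2 X < ceil_div k (ncolors X)) ->
  full_run k s t -> INV X k s -> INV X k t.
Proof.
move=> Hk Hc; elim => // s0 s' t0 sel Hst Hsel _ IH Hi.
apply: IH; exact: (@step_inv X k _ _ _ Hk Hc Hst Hsel Hi).
Qed.

Theorem lemma1 (X : seq nat) (k : nat) (fin : state) :
  1 <= k ->
  (o1 X < 2 * ceil_div k (ncolors X) \/ o2 X < ceil_div k (ncolors X)) ->
  full_run k (init_state X) fin ->
  final_state fin ->
  nblocks (out fin) = ncolors X.
Proof.
move=> Hk Hc Hr [Hi Hb].
have I0 : INV X k (init_state X) by split => //=.
case: (@run_inv X k _ _ Hk Hc Hr I0) => HP _ HB _ _ _.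
rewrite HB Hi Hb !cats0 in HP *.
rewrite /ncolors; apply: perm_size; apply: uniq_perm; rewrite ?undup_uniq // => z.
by rewrite !mem_undup (perm_mem HP).
Qed.
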